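(* Let $k$ be an arbitrary field of characteristic $0$. Let $x$, $y$ and $z$ be roots of unity in $k$, let $a$, $b$ and $c$ be integer numbers and consider the matrix $$M(a,b,c;x,y,z) = \begin{pmatrix} x^a & x^b & x^c \\ y^a & y^b & y^c \\ z^a & z^b & z^c \end{pmatrix}.$$ If this matrix is degenerate, then it has either two proportional rows or two proportional columns. *)

(* Defs.v *)
From HB Require Import structures.
From mathcomp Require Import all_boot all_order all_algebra.
Set Implicit Arguments. Unset Strict Implicit. Unset Printing Implicit Defensive.
Import Order.TTheory GRing.Theory Num.Theory.
Local Open Scope ring_scope.

Definition is_root_of_unity (k : fieldType) (x : k) : Prop :=
  exists n : nat, (0 < n)%N /\ x ^+ n = 1.

Definition Mabc (k : fieldType) (a b c : int) (x y z : k) : 'M[k]_3 :=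
  \matrix_(i < 3, j < 3)
    ([:: x; y; z]`_i) ^ ([:: a; b; c]`_j).

Definition rows_proportional (k : fieldType) (A : 'M[k]_3) (i j : 'I_3) : Prop :=
  (exists l : k, row i A = l *: row j A) \/ (exists l : k, row j A = l *: row i A).

Definition cols_proportional (k : fieldType) (A : 'M[k]_3) (i j : 'I_3) : Prop :=
  (exists l : k, col i A = l *: col j A) \/ (exists l : k, col j A = l *: col i A).

Definition has_two_proportional_rows (k : fieldType) (A : 'M[k]_3) : Prop :=
  exists i j : 'I_3, i != j /\ rows_proportional A i j.

Definition has_two_proportional_cols (k : fieldType) (A : 'M[k]_3) : Prop :=
  exists i j : 'I_3, i != j /\ cols_proportional A i j.

(* Main.v *)
Require Import Defs.
From HB Require Import structures.
From mathcomp Require Import all_boot all_order all_algebra.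
From mathcomp Require Import cyclic cyclotomic algC.
From mathcomp Require Import ring.
Import Order.TTheory GRing.Theory Num.Theory.
Local Open Scope ring_scope.

(* Proof outline:
   - normalise: y = x*u, z = x*w, b = a+p, c = a+q; det = 0 gives
     (u^p-1)(w^q-1) = (u^q-1)(w^p-1);
   - u, w lie in the cyclic group generated by a primitive N-th root g;
   - irreducibility of the cyclotomic polynomial (via algC) transfers the
     relation from g to g^-1, which yields A D = B C;
   - then {A, D} = {B, C} and the proportionality follows. *)
Local Open Scope ring_scope.

Lemma map_resultant' (aR rR : nzRingType) (f : {rmorphism aR -> rR}) (p q : {poly aR}) :
    f (lead_coef p) != 0 -> f (lead_coef q) != 0 ->
  f (resultant p q)= resultant (map_poly f p) (map_poly f q).
Proof.
move=> nz_fp nz_fq; rewrite /resultant /Sylvester_mx !size_map_poly_id0 //.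
rewrite -det_map_mx /= map_col_mx; congr (\det (col_mx _ _));
  by apply: map_lin1_mx => v; rewrite map_poly_rV rmorphM /= map_rVpoly.
Qed.

Section Char0.
Variables (F : fieldType) (chF : [pchar F] =i pred0).

Lemma intr0_char0 (c : int) : (c%:~R : F) = 0 -> c = 0.
Proof.
have H := (pcharf0P F).1 chF.
case: c => n.
  by change (n%:R = 0 :> F -> Posz n = 0) => /eqP; rewrite H => /eqP ->.
by rewrite NegzE mulrNz => /eqP; rewrite oppr_eq0; change ((n.+1)%:R == 0 :> F -> Negz n = 0); rewrite H.
Qed.

Lemma K1 (N : nat) (xi : F) : N.-primitive_root xi ->
  (map_poly intr 'Phi_N).[xi] = 0.
Proof.
move=> prim; have N_gt0 := prim_order_gt0 prim.
have: root (map_poly (intr : int -> F) ('X^N - 1)) xi.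
  by rewrite rmorphB rmorph1 /= map_polyXn rootE !hornerE prim_expr_order // subrr.
rewrite -(prod_Cyclotomic N_gt0) rmorph_prod /=.
apply: contraTeq => nz.
rewrite rootE horner_prod prodf_seq_eq0; apply/hasPn => d; rewrite -dvdn_divisors // => dN /=.
have [->|neq] := eqVneq d N; first by [].
have d_gt0 : (0 < d)%N by apply: dvdn_gt0 dN.
apply/negP => Hd.
have: root (map_poly (intr : int -> F) ('X^d - 1)) xi.
  have Hdd : d \in divisors d by rewrite -dvdn_divisors.
  rewrite -(prod_Cyclotomic d_gt0) (big_rem d Hdd) /=.
  by rewrite rmorphM rootM rootE Hd.
rewrite rmorphB rmorph1 /= map_polyXn rootE !hornerE subr_eq0 => /eqP /eqP.
rewrite -(prim_order_dvd prim) => Nd.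
have := dvdn_leq d_gt0 Nd; have := dvdn_leq N_gt0 dN.
by move=> h1 h2; move/eqP: neq; apply; apply/eqP; rewrite eqn_leq h1 h2.
Qed.


Lemma K2 (N : nat) (xi : F) (r : {poly int}) : N.-primitive_root xi ->
  (size r < size 'Phi_N)%N -> (map_poly intr r).[xi] = 0 -> r = 0.
Proof.
move=> prim szr rxi; apply/eqP; apply: contraT => nz_r.
have N_gt0 := prim_order_gt0 prim.
have Phi_gt1 : (1 < size 'Phi_N)%N by rewrite size_Cyclotomic ltnS totient_gt0.
have [r_gt1 | r_le1] := ltnP 1 (size r); last first.
  move: rxi; rewrite [r]size1_polyC // map_polyC hornerC => /intr0_char0 r0.
  by move: nz_r; rewrite [r]size1_polyC // r0 eqxx.
have [[u v] _ /= Hres] := resultant_in_ideal r_gt1 Phi_gt1.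
have res0 : resultant r 'Phi_N = 0.
  apply: intr0_char0.
  have := congr1 (fun p => (map_poly (intr : int -> F) p).[xi]) Hres.
  rewrite /= map_polyC hornerC => ->.
  by rewrite rmorphD !rmorphM /= hornerD !hornerM rxi (@K1 N xi prim) !mulr0 addr0.
have intrC_inj : injective (intr : int -> algC) by apply: intr_inj.
have resC : resultant (map_poly (intr : int -> algC) r) (map_poly intr 'Phi_N) = 0.
  rewrite -map_resultant' ?res0 ?rmorph0 // intr_eq0 lead_coef_eq0 //.
  by rewrite -size_poly_eq0 -(subnKC Phi_gt1).
move/eqP: resC; rewrite resultant_eq0 => gt1.
have /closed_rootP [z' ] : size (gcdp (map_poly (intr : int -> algC) r) (map_poly intr 'Phi_N)) != 1%N.
  by rewrite neq_ltn gt1 orbT.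
rewrite root_gcd => /andP [rz' phiz'].
have [z0 primz0] := C_prim_root_exists N_gt0.
have primz' : N.-primitive_root z'.
  by rewrite -(root_cyclotomic primz0) -(Cintr_Cyclotomic primz0).
have [p [Hp _] Hdiv] := minCpolyP z'.
have rQ : root (map_poly ratr (map_poly (intr : int -> rat) r)) z'.
  rewrite -map_poly_comp (eq_map_poly (g := intr)) // => c /=.
  by rewrite ratr_int.
rewrite Hdiv in rQ.
have nz_rQ : map_poly (intr : int -> rat) r != 0.
  by rewrite map_poly_eq0_id0 // intr_eq0 lead_coef_eq0.
have := dvdp_leq nz_rQ rQ.
rewrite size_map_inj_poly //; last exact: intr_inj.
have : size p = size 'Phi_N.
  rewrite -(size_map_poly (ratr : rat -> algC)) -Hp (minCpoly_cyclotomic primz').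
  rewrite -(Cintr_Cyclotomic primz') size_map_inj_poly //.
by move=> ->; rewrite leqNgt szr.
Qed.

Lemma K3 (N : nat) (xi xi' : F) (P : {poly int}) : N.-primitive_root xi ->
  N.-primitive_root xi' ->
  (map_poly intr P).[xi] = 0 -> (map_poly intr P).[xi'] = 0.
Proof.
move=> prim prim' Pxi.
have mon := Cyclotomic_monic N.
have HP := Pdiv.RingMonic.rdivp_eq mon P.
have szr : (size (Pdiv.Ring.rmodp P 'Phi_N) < size 'Phi_N)%N.
  by apply: Pdiv.Ring.ltn_rmodpN0; apply: monic_neq0.
have r0 : Pdiv.Ring.rmodp P 'Phi_N = 0.
  apply: (@K2 N xi _ prim szr).
  move: Pxi; rewrite {1}HP rmorphD rmorphM /= hornerD hornerM (@K1 N xi prim).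
  by rewrite mulr0 add0r.
rewrite HP r0 addr0 rmorphM /= hornerM (@K1 N xi' prim') mulr0 //.
Qed.
End Char0.
Lemma invG (F : fieldType) (N : nat) (g : F) (m : nat) : N.-primitive_root g ->
  (g ^+ m)^-1 = g ^+ (m * N.-1).
Proof.
move=> prim; have N_gt0 := prim_order_gt0 prim.
have nzg : g != 0 by rewrite (prim_root_eq0 prim) -lt0n.
have nzgm : g ^+ m != 0 by rewrite expf_neq0.
apply: (mulfI nzgm); rewrite mulfV // -exprD -mulnS prednK // mulnC exprM.
by rewrite (prim_expr_order prim) expr1n.
Qed.

Lemma primV (F : fieldType) (N : nat) (g : F) : N.-primitive_root g ->
  N.-primitive_root g^-1.
Proof.
move=> prim; have N_gt0 := prim_order_gt0 prim.
rewrite -[g]expr1 (@invG _ _ _ 1%N prim) mul1n (prim_root_exp_coprime _ prim).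
by case: N N_gt0 {prim} => // n _; rewrite coprimenS.
Qed.

Lemma KEY (F : fieldType) (chF : [pchar F] =i pred0) (N : nat) (g : F)
  (al be ga de : nat) : N.-primitive_root g ->
  let A := g ^+ al in let B := g ^+ be in let C := g ^+ ga in let D := g ^+ de in
  (A - 1) * (D - 1) = (B - 1) * (C - 1) ->
  A != 1 -> B != 1 -> C != 1 -> D != 1 -> A * D = B * C.
Proof.
move=> prim A B C D H nA nB nC nD.
have nzg : g != 0 by rewrite (prim_root_eq0 prim) -lt0n (prim_order_gt0 prim).
pose P : {poly int} := ('X^al - 1) * ('X^de - 1) - ('X^be - 1) * ('X^ga - 1).
have ev t : (map_poly (intr : int -> F) P).[t] =
    (t ^+ al - 1) * (t ^+ de - 1) - (t ^+ be - 1) * (t ^+ ga - 1).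
  by rewrite /P !(rmorphB, rmorphM, rmorph1) /= !map_polyXn !hornerE.
have H1 : (map_poly (intr : int -> F) P).[g] = 0 by rewrite ev H subrr.
have H2 : (A^-1 - 1) * (D^-1 - 1) = (B^-1 - 1) * (C^-1 - 1).
  have := @K3 F chF N g g^-1 P prim (@primV _ _ _ prim) H1; rewrite ev !exprVn.
  by move/eqP; rewrite subr_eq0 => /eqP.
have nA0 : A != 0 by rewrite /A expf_neq0.
have nB0 : B != 0 by rewrite /B expf_neq0.
have nC0 : C != 0 by rewrite /C expf_neq0.
have nD0 : D != 0 by rewrite /D expf_neq0.
have eX (X Y : F) : X != 0 -> Y != 0 -> (X - 1) * (Y - 1) = X * Y * ((X^-1 - 1) * (Y^-1 - 1)).
  by move=> hX hY; field; rewrite hX hY.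
have e1 := eX A D nA0 nD0.
have e2 := eX B C nB0 nC0.
have nz' : (A^-1 - 1) * (D^-1 - 1) != 0.
  rewrite mulf_neq0 // subr_eq0.
    by apply: contra_neq nA => h; rewrite -[A]invrK h invr1.
  by apply: contra_neq nD => h; rewrite -[D]invrK h invr1.
by apply: (mulIf nz'); rewrite -e1 H e2 H2.
Qed.
Lemma CG (F : fieldType) (u w : F) (M : nat) : (0 < M)%N -> u ^+ M = 1 -> w ^+ M = 1 ->
  exists N (g : F), [/\ N.-primitive_root g, (exists i, u = g ^+ i) & (exists j, w = g ^+ j)].
Proof.
move=> M_gt0 uM wM.
pose S := undup [seq u ^+ i * w ^+ j | i <- iota 0 M, j <- iota 0 M].
have memS t : t \in S <-> exists i j, t = u ^+ i * w ^+ j.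
  rewrite mem_undup; split.
    by case/allpairsP => [[i j] /= [_ _ ->]]; exists i, j.
  case=> i [j ->]; apply/allpairsP; exists (i %% M, j %% M)%N => /=.
  by rewrite !mem_iota /= !add0n !ltn_pmod // !expr_mod.
have S1 : 1 \in S by apply/memS; exists 0%N, 0%N; rewrite !expr0 mulr1.
have SM s t : s \in S -> t \in S -> s * t \in S.
  move=> /memS [i [j ->]] /memS [i' [j' ->]]; apply/memS; exists (i + i')%N, (j + j')%N.
  by rewrite !exprD mulrACA.
have nzS t : t \in S -> t != 0.
  move=> /memS [i [j ->]]; rewrite mulf_neq0 // expf_neq0 //; apply: contraTneq isT => e.
    by move: uM; rewrite e expr0n gtn_eqF // => /eqP; rewrite eq_sym oner_eq0.
  by move: wM; rewrite e expr0n gtn_eqF // => /eqP; rewrite eq_sym oner_eq0.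
have US : uniq S by apply: undup_uniq.
pose m := size S.
have m_gt0 : (0 < m)%N by rewrite /m; case: (S) S1.
have powS g : g \in S -> g ^+ m = 1.
  move=> gS.
  have pe : perm_eq S (map ( *%R g) S).
    apply: uniq_perm => //.
      rewrite map_inj_uniq //; exact: mulfI (nzS _ gS).
    have Um : uniq (map ( *%R g) S).
      rewrite map_inj_uniq //; exact: mulfI (nzS _ gS).
    have sub : {subset map ( *%R g) S <= S}.
      by move=> t /mapP [t' t'S ->]; apply: SM.
    have [_ H] := uniq_min_size Um sub (eq_leq (esym (size_map _ _))).
    by move=> t; rewrite H.
  have : \prod_(t <- S) t = \prod_(t <- map ( *%R g) S) t by apply: perm_big.
  rewrite big_map big_split /= big_const_seq count_predT iter_mulr_1 -/m.
  have nzP : \prod_(t <- S) t != 0.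
    by rewrite prodf_seq_neq0; apply/allP => t tS; apply: nzS.
  move/(congr1 (fun t => t / \prod_(t <- S) t)).
  by rewrite mulfK // divff // => ->.
have allS : all m.-unity_root S by apply/allP => t tS; rewrite unity_rootE powS.
have /hasP [g gS primg] := @has_prim_root F m S m_gt0 allS US (leqnn _).
have gpow i : g ^+ i \in S.
  by elim: i => [|i IH]; rewrite ?expr0 // exprS SM.
have Upow : uniq [seq g ^+ i | i <- iota 0 m].
  rewrite map_inj_in_uniq ?iota_uniq // => i j; rewrite !mem_iota /= !add0n => im jm /eqP.
  by rewrite (eq_prim_root_expr primg) !modn_small // => /eqP.
have sub2 : {subset [seq g ^+ i | i <- iota 0 m] <= S}.
  by move=> t /mapP [i _ ->].
have [_ eqS'] := uniq_min_size Upow sub2 (eq_leq (esym (etrans (size_map _ _) (size_iota _ _)))).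
exists m, g; split => //.
  have : u \in S by apply/memS; exists 1%N, 0%N; rewrite expr1 expr0 mulr1.
  by rewrite -eqS' => /mapP [i _ ->]; exists i.
have : w \in S by apply/memS; exists 0%N, 1%N; rewrite expr1 expr0 mul1r.
by rewrite -eqS' => /mapP [i _ ->]; exists i.
Qed.
Lemma det3 (R : comNzRingType) (A : 'M[R]_3) : \det A =
  A 0 0 * (A 1 1 * A 2 2 - A 1 2 * A 2 1) - A 0 1 * (A 1 0 * A 2 2 - A 1 2 * A 2 0)
  + A 0 2 * (A 1 0 * A 2 1 - A 1 1 * A 2 0).
Proof.
pose B := fun m n : nat => A (inord m) (inord n).
have HB : forall i j : 'I_3, A i j = B i j by move=> i j; rewrite /B !inord_val.
rewrite (expand_det_row _ 0) !big_ord_recl big_ord0 addr0 /cofactor.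
rewrite !(expand_det_row _ 0) !big_ord_recl !big_ord0 !addr0 /cofactor.
rewrite !det_mx11 !mxE !HB /= /bump /=.
rewrite !expr0 !expr1 !mul1r; ring.
Qed.

Section Mat.
Variables (k : fieldType) (x u w : k) (a p q : int).
Hypotheses (nx : x != 0) (nu : u != 0) (nw : w != 0).
Let M := Mabc a (a + p) (a + q) x (x * u) (x * w).

Lemma detM : \det M = x ^ a * (x * u) ^ a * (x * w) ^ a * x ^ p * x ^ q *
  ((u ^ p - 1) * (w ^ q - 1) - (u ^ q - 1) * (w ^ p - 1)).
Proof.
rewrite det3 /M /Mabc !mxE /= !expfzMl !expfzDr //; ring.
Qed.

Lemma rows01 : u ^ p = 1 -> u ^ q = 1 -> has_two_proportional_rows M.
Proof.
move=> h1 h2; exists 1, 0; split => //; left; exists (u ^ a).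
apply/rowP => j; rewrite /M /Mabc !mxE; case: j => [[|[|[|//]]] hj] /=;
  rewrite ?addr0 ?expfzMl ?expfzDr // ?h1 ?h2; ring.
Qed.

Lemma rows02 : w ^ p = 1 -> w ^ q = 1 -> has_two_proportional_rows M.
Proof.
move=> h1 h2; exists 2, 0; split => //; left; exists (w ^ a).
apply/rowP => j; rewrite /M /Mabc !mxE; case: j => [[|[|[|//]]] hj] /=;
  rewrite ?addr0 ?expfzMl ?expfzDr // ?h1 ?h2; ring.
Qed.

Lemma rows12 : u ^ p = w ^ p -> u ^ q = w ^ q -> has_two_proportional_rows M.
Proof.
move=> h1 h2; exists 2, 1; split => //; left; exists (w ^ a / u ^ a).
have nua : u ^ a != 0 by rewrite expfz_neq0.
apply/rowP => j; rewrite /M /Mabc !mxE; case: j => [[|[|[|//]]] hj] /=;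
  rewrite ?addr0 ?expfzMl ?expfzDr // ?h1 ?h2; field; exact: nua.
Qed.

Lemma cols01 : u ^ p = 1 -> w ^ p = 1 -> has_two_proportional_cols M.
Proof.
move=> h1 h2; exists 1, 0; split => //; left; exists (x ^ p).
apply/colP => i; rewrite /M /Mabc !mxE; case: i => [[|[|[|//]]] hi] /=;
  rewrite ?addr0 ?expfzMl ?expfzDr // ?h1 ?h2; ring.
Qed.

Lemma cols02 : u ^ q = 1 -> w ^ q = 1 -> has_two_proportional_cols M.
Proof.
move=> h1 h2; exists 2, 0; split => //; left; exists (x ^ q).
apply/colP => i; rewrite /M /Mabc !mxE; case: i => [[|[|[|//]]] hi] /=;
  rewrite ?addr0 ?expfzMl ?expfzDr // ?h1 ?h2; ring.
Qed.

Lemma cols12 : u ^ p = u ^ q -> w ^ p = w ^ q -> has_two_proportional_cols M.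
Proof.
move=> h1 h2; exists 2, 1; split => //; left; exists (x ^ q / x ^ p).
have nxp : x ^ p != 0 by rewrite expfz_neq0.
apply/colP => i; rewrite /M /Mabc !mxE; case: i => [[|[|[|//]]] hi] /=;
  rewrite ?addr0 ?expfzMl ?expfzDr // ?h1 ?h2; field; exact: nxp.
Qed.

End Mat.

Lemma powG (F : fieldType) (N : nat) (g : F) (i : nat) (e : int) :
  N.-primitive_root g -> exists al : nat, (g ^+ i) ^ e = g ^+ al.
Proof.
move=> prim; case: e => n.
  by exists (i * n)%N; rewrite /exprz exprM.
by exists ((i * n.+1) * N.-1)%N; rewrite /exprz -exprM (@invG _ _ _ _ prim).
Qed.

Lemma G2 (F : fieldType) (A B C D : F) : (A - 1) * (D - 1) = (B - 1) * (C - 1) ->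
  (A != 1 -> B != 1 -> C != 1 -> D != 1 -> A * D = B * C) ->
  (A = 1 /\ B = 1) \/ (C = 1 /\ D = 1) \/ (A = 1 /\ C = 1) \/ (B = 1 /\ D = 1) \/
      (A = B /\ C = D) \/ (A = C /\ B = D).
Proof.
move=> H K.
have [eA|nA] := eqVneq A 1.
  move: H; rewrite eA subrr mul0r => /esym/eqP; rewrite mulf_eq0 !subr_eq0.
  by case/orP => /eqP e; [left | right; right; left].
have [eB|nB] := eqVneq B 1.
  move: H; rewrite eB subrr mul0r => /eqP; rewrite mulf_eq0 !subr_eq0.
  by case/orP => /eqP e; [rewrite e eqxx in nA | do 3 right; left].
have [eC|nC] := eqVneq C 1.
  move: H; rewrite eC subrr mulr0 => /eqP; rewrite mulf_eq0 !subr_eq0.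
  by case/orP => /eqP e; [rewrite e eqxx in nA | right; left].
have [eD|nD] := eqVneq D 1.
  move: H; rewrite eD subrr mulr0 => /esym/eqP; rewrite mulf_eq0 !subr_eq0.
  by case/orP => /eqP e; [rewrite e eqxx in nB | rewrite e eqxx in nC].
have AD := K nA nB nC nD.
have S : A + D = B + C.
  have E : (A - 1) * (D - 1) - (B - 1) * (C - 1) = (A * D - B * C) - ((A + D) - (B + C)).
    by ring.
  move: E; rewrite H subrr AD subrr sub0r => /esym/eqP; rewrite oppr_eq0 subr_eq0.
  by move/eqP.
have E2 : (A - B) * (A - C) = A * ((A + D) - (B + C)) + (B * C - A * D) by ring.
move: E2; rewrite S AD !subrr mulr0 addr0 => /eqP; rewrite mulf_eq0 !subr_eq0.
case/orP => /eqP e; do 4 right.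
  by left; split => //; apply: (addrI A); rewrite {1}e -S.
by right; split => //; apply: (addrI A); rewrite S e addrC.
Qed.

Theorem lemma5p17 (k : fieldType) (hchar : [pchar k] =i pred0)
  (x y z : k) (hx : is_root_of_unity x) (hy : is_root_of_unity y)
  (hz : is_root_of_unity z) (a b c : int) :
  \det (Mabc a b c x y z) = 0 ->
  has_two_proportional_rows (Mabc a b c x y z) \/
  has_two_proportional_cols (Mabc a b c x y z).
Proof.
move=> hdet.
have nzr (v : k) n : (0 < n)%N -> v ^+ n = 1 -> v != 0.
  move=> n0 hn; apply: contraTneq isT => e; move: hn.
  by rewrite e expr0n gtn_eqF // => /eqP; rewrite eq_sym oner_eq0.
case: hx => nx [nx0 hxn]; case: hy => ny [ny0 hyn]; case: hz => nz [nz0 hzn].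
have nzx := nzr _ _ nx0 hxn.
pose M := (nx * ny * nz)%N.
have M0 : (0 < M)%N by rewrite !muln_gt0 nx0 ny0 nz0.
have pM (v : k) n : v ^+ n = 1 -> (n %| M)%N -> v ^+ M = 1.
  by move=> hv /dvdnP [m ->]; rewrite mulnC exprM hv expr1n.
have xM : x ^+ M = 1 by apply: (pM _ nx) => //; rewrite /M -mulnA; apply: dvdn_mulr.
have yM : y ^+ M = 1 by apply: (pM _ ny) => //; rewrite /M mulnAC; apply: dvdn_mull.
have zM : z ^+ M = 1 by apply: (pM _ nz) => //; rewrite /M; apply: dvdn_mull.
pose u := y / x; pose w := z / x.
have uM : u ^+ M = 1 by rewrite /u exprMn exprVn xM yM invr1 mulr1.
have wM : w ^+ M = 1 by rewrite /w exprMn exprVn xM zM invr1 mulr1.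
have Ey : y = x * u by rewrite /u mulrC divfK.
have Ez : z = x * w by rewrite /w mulrC divfK.
have nu := nzr _ _ M0 uM; have nw := nzr _ _ M0 wM.
clearbody u w; subst y z.
have [p Ep] : exists p, b = a + p by exists (b - a); rewrite addrC subrK.
have [q Eq] : exists q, c = a + q by exists (c - a); rewrite addrC subrK.
subst b c.
rewrite detM // in hdet.
have nzf : x ^ a * (x * u) ^ a * (x * w) ^ a * x ^ p * x ^ q != 0.
  by rewrite !mulf_neq0 // expfz_neq0 // mulf_neq0.
move/eqP: hdet; rewrite mulf_eq0 (negbTE nzf) /= subr_eq0 => /eqP key.
have [N [g [prim [i Eu] [j Ew]]]] := @CG k u w M M0 uM wM.
have [al Eal] := @powG k N g i p prim.
have [be Ebe] := @powG k N g i q prim.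
have [ga Ega] := @powG k N g j p prim.
have [de Ede] := @powG k N g j q prim.
have K : u ^ p != 1 -> u ^ q != 1 -> w ^ p != 1 -> w ^ q != 1 ->
    u ^ p * w ^ q = u ^ q * w ^ p.
  rewrite Eu Ew Eal Ebe Ega Ede; apply: (@KEY k hchar N g al be ga de prim).
  by move: key; rewrite Eu Ew Eal Ebe Ega Ede.
case: (@G2 k _ _ _ _ key K) => [[h1 h2]|[[h1 h2]|[[h1 h2]|[[h1 h2]|[[h1 h2]|[h1 h2]]]]]].
- by left; apply: rows01.
- by left; apply: rows02.
- by right; apply: cols01.
- by right; apply: cols02.
- by right; apply: cols12.
- by left; apply: rows12.
Qed.
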